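(* Let $R$ be an associative unital division ring over a field $F$ of characteristic $0$ and let $p,q\in F$. Suppose $u_{m,n}\in R$ and invertible $v_{m,n}\in R$ ($(m,n)\in\mathbb{Z}^2$) satisfy for all $(m,n)$ $$p\,v_{m,n+1}=u_{m,n+1}-u_{m+1,n},\qquad q\,v_{m,n}^{-1}=u_{m,n-1}-u_{m+1,n}.$$ Then for all $(m,n)$: $$(u_{m,n+1}-u_{m+1,n})(u_{m,n}-u_{m+1,n+1})=pq,\qquad (u_{m,n}-u_{m+1,n+1})(u_{m,n+1}-u_{m+1,n})=pq,$$ and $$p\,(v_{m,n}-v_{m+1,n+1})=q\,(v_{m,n+1}^{-1}-v_{m+1,n}^{-1}).$$ *)

(* Defs.v *)
From HB Require Import structures.
From mathcomp Require Import all_boot all_order all_algebra.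
Set Implicit Arguments. Unset Strict Implicit. Unset Printing Implicit Defensive.
Import Order.TTheory GRing.Theory Num.Theory.
Local Open Scope ring_scope.

(* A (possibly noncommutative) unit ring R is a division ring when every
   nonzero element is invertible (and 1 != 0, which unitRingType already has). *)
Definition is_division_ring (R : unitRingType) : Prop :=
  forall x : R, x != 0 -> x \is a GRing.unit.

(* Main.v *)
Require Import Defs.
From HB Require Import structures.
From mathcomp Require Import all_boot all_order all_algebra.
Import Order.TTheory GRing.Theory Num.Theory.
Local Open Scope ring_scope.

Lemma sub4 (V : zmodType) (a b c d : V) : a - b - (c - d) = a - c - (b - d).
Proof. by rewrite !opprB !addrA [RHS]addrAC [LHS]addrAC [a - c - b]addrAC. Qed.

Theorem theorem5p4 (F : fieldType) (R : unitAlgType F)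
  (hchar : [pchar F] =i pred0) (hdiv : is_division_ring R)
  (p q : F) (u v : int -> int -> R)
  (hvunit : forall m n : int, v m n \is a GRing.unit)
  (h1 : forall m n : int, p *: v m (n + 1) = u m (n + 1) - u (m + 1) n)
  (h2 : forall m n : int, q *: (v m n)^-1 = u m (n - 1) - u (m + 1) n) :
  forall m n : int,
    [/\ (u m (n + 1) - u (m + 1) n) * (u m n - u (m + 1) (n + 1)) = (p * q)%:A,
        (u m n - u (m + 1) (n + 1)) * (u m (n + 1) - u (m + 1) n) = (p * q)%:A
      & p *: (v m n - v (m + 1) (n + 1))
          = q *: ((v m (n + 1))^-1 - (v (m + 1) n)^-1)].
Proof.
move=> m n.
have ha := h1 m n.
have hb := h2 m (n + 1).
rewrite addrK in hb.
have hv := hvunit m (n + 1).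
split.
- rewrite -ha -hb -scalerAl -scalerAr scalerA mulrV //.
- rewrite -ha -hb -scalerAl -scalerAr scalerA mulVr // mulrC.
  by [].
- have hc := h1 m (n - 1). rewrite subrK in hc.
  have hd := h1 (m + 1) n.
  have he := h2 (m + 1) n.
  have sB : forall (a : F) (x y : R), a *: (x - y) = a *: x - a *: y.
    by move=> a x y; rewrite scalerDr scalerN.
  rewrite !sB hc hd hb he.
  exact: sub4.
Qed.
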